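(* Let $K\ge2$, $\theta>1$, $T>0$, and let $\zeta_1,\dots,\zeta_{K-1}$ be $C^1$ real functions on $[T,\infty)$ satisfying, for $k=1,\dots,K-1$ and all $t\ge T$, $$\dot\zeta_k=t^{-1}\Big(-\gamma_{k+1}(e^{-\zeta_{k+1}}-1)+2\gamma_k(e^{-\zeta_k}-1)-\gamma_{k-1}(e^{-\zeta_{k-1}}-1)\Big)+O(t^{-\theta}),$$ where $\gamma_k=\frac{k(K-k)}{2}$ (so $\gamma_0=\gamma_K=0$, and the terms involving $\zeta_0,\zeta_K$ vanish), and $O(t^{-\theta})$ denotes a function bounded in absolute value by $Ct^{-\theta}$ for a fixed constant $C$. Then there exists $M_1>0$ such that $|\zeta_k(t)|\le M_1$ for all $k=1,\dots,K-1$ and all $t\ge T$. *)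

(* Defs.v *)
From Stdlib Require Import Reals.
Open Scope R_scope.

Definition gam (K k : nat) : R := INR k * INR (K - k) / 2.

(* For k = 1 the term with index k-1 = 0 has gam K 0 = 0; for k = K-1 the
   term with index K has gam K K = 0, so the values z 0, z K are irrelevant. *)
Definition rhs (K : nat) (z : nat -> R -> R) (k : nat) (t : R) : R :=
  - gam K (S k) * (exp (- z (S k) t) - 1)
  + 2 * gam K k * (exp (- z k t) - 1)
  - gam K (k - 1)%nat * (exp (- z (k - 1)%nat t) - 1).

(* Main.v *)
Require Import Defs.
From Stdlib Require Import Reals Lra Lia Psatz.
Open Scope R_scope.

Fixpoint sumR (g : nat -> R) (n : nat) : R :=
  match n with O => 0 | S m => sumR g m + g (S m) end.

Lemma sumR_le g1 g2 n : (forall k, (1 <= k <= n)%nat -> g1 k <= g2 k) -> sumR g1 n <= sumR g2 n.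
Proof. induction n; simpl; intros H; [lra|].
  assert (sumR g1 n <= sumR g2 n) by (apply IHn; intros; apply H; lia).
  assert (g1 (S n) <= g2 (S n)) by (apply H; lia). lra. Qed.

Lemma sumR_plus g1 g2 n : sumR (fun k => g1 k + g2 k) n = sumR g1 n + sumR g2 n.
Proof. induction n; simpl; [lra|]. rewrite IHn; ring. Qed.

Lemma sumR_scal a g n : sumR (fun k => a * g k) n = a * sumR g n.
Proof. induction n; simpl; [lra|]. rewrite IHn; ring. Qed.

Lemma sumR_nonneg g n : (forall k, (1 <= k <= n)%nat -> 0 <= g k) -> 0 <= sumR g n.
Proof. intros H. apply Rle_trans with (sumR (fun _ => 0) n).
  - clear H; induction n; simpl; lra.
  - apply sumR_le; auto. Qed.

Lemma sumR_ge_term g n k : (forall j, (1 <= j <= n)%nat -> 0 <= g j) -> (1 <= k <= n)%nat -> g k <= sumR g n.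
Proof. induction n; intros H Hk; [lia|]. simpl.
  destruct (Nat.eq_dec k (S n)) as [->|Hne].
  - assert (0 <= sumR g n) by (apply sumR_nonneg; intros; apply H; lia). lra.
  - assert (g k <= sumR g n) by (apply IHn; [intros; apply H; lia|lia]).
    assert (0 <= g (S n)) by (apply H; lia). lra. Qed.

Lemma lap_aux (W : nat -> R) n : W 0%nat = 0 ->
  0 <= sumR (fun k => W k * (- W (S k) + 2 * W k - W (k - 1)%nat)) n - W n * (W n - W (S n)).
Proof. intros H0. induction n; cbn [sumR].
  - rewrite H0; lra.
  - replace (S n - 1)%nat with n by lia.
    assert (0 <= (W (S n) - W n) ^ 2) by apply pow2_ge_0. nra. Qed.

Lemma dl_eq f x l1 l2 : l1 = l2 -> derivable_pt_lim f x l1 -> derivable_pt_lim f x l2.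
Proof. intros ->; auto. Qed.

Lemma sum_deriv (h h' : nat -> R -> R) n t :
  (forall k, (1 <= k <= n)%nat -> derivable_pt_lim (h k) t (h' k t)) ->
  derivable_pt_lim (fun s => sumR (fun k => h k s) n) t (sumR (fun k => h' k t) n).
Proof. induction n; intros H; simpl.
  - apply derivable_pt_lim_const.
  - apply (derivable_pt_lim_plus (fun s => sumR (fun k => h k s) n) (h (S n))).
    + apply IHn; intros; apply H; lia.
    + apply H; lia. Qed.

Definition ff (a : R) := exp (- a) - 1 + a.

Lemma dl_term g c t d : derivable_pt_lim g t d ->
  derivable_pt_lim (fun s => c * ff (g s)) t (c * ((1 - exp (- g t)) * d)).
Proof. intros Hg. unfold ff.
  apply (dl_eq _ _ (c * ((exp (- g t) * (-1 * d)) - 0 + d))); [ring|].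
  apply (derivable_pt_lim_scal (fun s => exp (- g s) - 1 + g s)).
  apply (derivable_pt_lim_plus (fun s => exp (- g s) - 1) g); auto.
  apply (derivable_pt_lim_minus (fun s => exp (- g s)) (fun _ => 1)); [|apply derivable_pt_lim_const].
  apply (derivable_pt_lim_comp (fun s => - g s) exp).
  - apply (dl_eq _ _ (- d)); [ring|]. apply (derivable_pt_lim_opp g); auto.
  - apply derivable_pt_lim_exp. Qed.

Lemma exp_2y y : 0 <= y -> 2 * y <= exp y.
Proof. intros Hy. assert (E: exp y = exp (y/2) * exp (y/2)) by (rewrite <- exp_plus; f_equal; field). rewrite E.
  assert (1 + y/2 <= exp (y/2)) by apply exp_ineq1_le.
  set (v := y/2) in *. set (u := exp v) in *. replace y with (2*v) by (unfold v; field).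
  assert (0 <= v) by (unfold v; lra).
  assert ((1+v)*(1+v) <= u*u) by (apply Rmult_le_compat; lra).
  assert (0 <= (1-v)*(1-v)) by apply Rle_0_sqr. clearbody u v. nra. Qed.

Lemma ff_ge0 a : 0 <= ff a.
Proof. unfold ff. assert (1 + - a <= exp (-a)) by apply exp_ineq1_le. lra. Qed.

Lemma abs_le_ff a : Rabs a <= ff a + 1.
Proof. unfold ff. unfold Rabs; destruct (Rcase_abs a).
  - assert (2 * - a <= exp (- a)) by (apply exp_2y; lra). lra.
  - assert (0 < exp (-a)) by apply exp_pos. lra. Qed.

Lemma abs_w_le a : Rabs (exp (- a) - 1) <= 2 * ff a + 1.
Proof. unfold ff. unfold Rabs; destruct (Rcase_abs (exp (-a) - 1)).
  - assert (1 + - a <= exp (-a)) by apply exp_ineq1_le.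
    assert (0 < exp (-a)) by apply exp_pos. lra.
  - destruct (Rle_dec 0 a).
    + assert (0 < exp (-a)) by apply exp_pos. lra.
    + assert (2 * - a <= exp (- a)) by (apply exp_2y; lra). lra. Qed.

Lemma sumR_ext g1 g2 n : (forall k, g1 k = g2 k) -> sumR g1 n = sumR g2 n.
Proof. intros H; induction n; simpl; [lra|]. rewrite IHn, H; lra. Qed.

Theorem mainTheorem12 (K : nat) (theta T : R) (z dz : nat -> R -> R)
  (hK : (2 <= K)%nat) (htheta : 1 < theta) (hT : 0 < T)
  (hderiv : forall k t, (1 <= k <= K - 1)%nat -> T <= t ->
              derivable_pt_lim (z k) t (dz k t))
  (hcont : forall k t, (1 <= k <= K - 1)%nat -> T <= t ->
              continuity_pt (dz k) t)
  (hode : exists C : R, forall k t, (1 <= k <= K - 1)%nat -> T <= t ->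
              Rabs (dz k t - / t * rhs K z k t) <= C * Rpower t (- theta)) :
  exists M1 : R, 0 < M1 /\
    forall k t, (1 <= k <= K - 1)%nat -> T <= t -> Rabs (z k t) <= M1.
Proof.
  destruct hode as [C hC].
  set (C' := Rabs C).
  assert (C'ge : C <= C') by apply Rle_abs.
  assert (C'0 : 0 <= C') by apply Rabs_pos.
  set (n := (K - 1)%nat).
  set (V := fun s => sumR (fun k => gam K k * ff (z k s)) n).
  set (G := sumR (fun k => gam K k) n).
  set (D := fun s => sumR (fun k => gam K k * ((1 - exp (- z k s)) * dz k s)) n).
  assert (gpos : forall k, (1 <= k <= n)%nat -> 1/2 <= gam K k).
  { intros k Hk. unfold gam. assert (1 <= INR k) by (apply (le_INR 1); lia).
    assert (1 <= INR (K-k)) by (apply (le_INR 1); unfold n in Hk; lia). nra. }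
  assert (Vpos : forall s, 0 <= V s).
  { intros s; unfold V; apply sumR_nonneg; intros k Hk.
    specialize (gpos k Hk); specialize (ff_ge0 (z k s)); intros; nra. }
  assert (Gpos : 0 <= G).
  { unfold G; apply sumR_nonneg; intros k Hk. specialize (gpos k Hk); lra. }
  assert (Hder : forall s, T <= s -> derivable_pt_lim V s (D s)).
  { intros s Hs. unfold V, D.
    apply (sum_deriv (fun k s => gam K k * ff (z k s)) (fun k s => gam K k * ((1 - exp (- z k s)) * dz k s))).
    intros k Hk. apply dl_term. apply hderiv; [unfold n in Hk; lia| lra]. }
  assert (HD : forall s, T <= s -> D s <= C' * Rpower s (-theta) * (2 * V s + G)).
  { intros s Hs.
    set (W := fun j => gam K j * (exp (- z j s) - 1)).
    assert (Rp: 0 < Rpower s (-theta)) by (unfold Rpower; apply exp_pos).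
    apply Rle_trans with (sumR (fun k => (- / s) * (W k * rhs K z k s) + (C' * Rpower s (-theta)) * (2 * (gam K k * ff (z k s)) + gam K k)) n).
    - apply sumR_le. intros k Hk.
      specialize (hC k s ltac:(unfold n in Hk; lia) Hs).
      set (eps := dz k s - / s * rhs K z k s) in *.
      assert (E : gam K k * ((1 - exp (- z k s)) * dz k s) = - / s * (W k * rhs K z k s) - W k * eps) by (unfold eps, W; ring).
      rewrite E.
      assert (hW : Rabs (W k) <= gam K k * (2 * ff (z k s) + 1)).
      { unfold W. rewrite Rabs_mult. rewrite (Rabs_right (gam K k)) by (specialize (gpos k Hk); lra).
        apply Rmult_le_compat_l; [specialize (gpos k Hk); lra| apply abs_w_le]. }
      assert (h1 : - (W k * eps) <= Rabs (W k) * Rabs eps).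
      { rewrite <- Rabs_mult. rewrite <- Rabs_Ropp. apply Rle_abs. }
      assert (h2 : Rabs (W k) * Rabs eps <= Rabs (W k) * (C' * Rpower s (-theta))).
      { apply Rmult_le_compat_l; [apply Rabs_pos|]. apply Rle_trans with (1:=hC). apply Rmult_le_compat_r; lra. }
      assert (h3 : Rabs (W k) * (C' * Rpower s (-theta)) <= gam K k * (2 * ff (z k s) + 1) * (C' * Rpower s (-theta))).
      { apply Rmult_le_compat_r; [|exact hW]. apply Rmult_le_pos; lra. }
      lra.
    - rewrite sumR_plus.
      rewrite (sumR_scal (- / s) (fun k => W k * rhs K z k s)).
      rewrite (sumR_scal (C' * Rpower s (-theta)) (fun k => 2 * (gam K k * ff (z k s)) + gam K k)).
      rewrite (sumR_plus (fun k => 2 * (gam K k * ff (z k s))) (fun k => gam K k)).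
      rewrite (sumR_scal 2 (fun k => gam K k * ff (z k s))).
      change (sumR (fun k => gam K k * ff (z k s)) n) with (V s).
      change (sumR (fun k => gam K k) n) with G.
      assert (P : 0 <= sumR (fun k => W k * rhs K z k s) n).
      { rewrite (sumR_ext _ (fun k => W k * (- W (S k) + 2 * W k - W (k - 1)%nat))).
        2:{ intros k; unfold W, rhs; ring. }
        assert (W0 : W 0%nat = 0) by (unfold W, gam; change (INR 0) with 0; unfold Rdiv; rewrite !Rmult_0_l; reflexivity).
        pose proof (lap_aux W n W0) as L.
        assert (WK : W (S n) = 0).
        { unfold W, gam. replace (S n) with K by (unfold n; lia). rewrite Nat.sub_diag. change (INR 0) with 0. unfold Rdiv. rewrite Rmult_0_r, Rmult_0_l, Rmult_0_l. reflexivity. }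
        rewrite WK in L. assert (0 <= W n * W n) by apply Rle_0_sqr. lra. }
      assert (0 < / s) by (apply Rinv_0_lt_compat; lra).
      assert (0 <= / s * sumR (fun k => W k * rhs K z k s) n) by (apply Rmult_le_pos; lra).
      lra. }
  set (Phi := fun s => 2 * C' / (theta - 1) * Rpower s (1 - theta)).
  assert (Phipos : forall s, 0 <= Phi s).
  { intros s. unfold Phi. apply Rmult_le_pos.
    - unfold Rdiv. apply Rmult_le_pos; [lra|]. left; apply Rinv_0_lt_compat; lra.
    - left; unfold Rpower; apply exp_pos. }
  set (g := fun s => (2 * V s + G) * exp (Phi s)).
  assert (Hg : forall s, T <= s -> g s <= g T).
  { intros s Hs. destruct (Req_dec s T) as [->|Hne]; [lra|].
    set (g' := fun c => (2 * D c + 0) * exp (Phi c) + (2 * V c + G) * (exp (Phi c) * (2 * C' / (theta - 1) * ((1 - theta) * Rpower c (1 - theta - 1))))).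
    destruct (MVT_cor2 g g' T s) as [c [Hc1 Hc2]]; [lra| |].
    - intros c Hc. unfold g, g'.
      apply (derivable_pt_lim_mult (fun s => 2 * V s + G) (fun s => exp (Phi s))).
      + apply (derivable_pt_lim_plus (fun s => 2 * V s) (fun _ => G)); [|apply derivable_pt_lim_const].
        apply (derivable_pt_lim_scal V 2). apply Hder; lra.
      + apply (derivable_pt_lim_comp Phi exp c (2*C'/(theta-1) * ((1-theta) * Rpower c (1-theta-1))) (exp (Phi c))).
        * unfold Phi. apply (derivable_pt_lim_scal (fun s => Rpower s (1-theta))). apply derivable_pt_lim_power; lra.
        * apply derivable_pt_lim_exp.
    - assert (HDc := HD c ltac:(lra)).
      assert (E : g' c = exp (Phi c) * (2 * D c - 2 * C' * Rpower c (- theta) * (2 * V c + G))).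
      { unfold g'. replace (1 - theta - 1) with (- theta) by ring. field. lra. }
      assert (0 < exp (Phi c)) by apply exp_pos.
      assert (g' c <= 0).
      { rewrite E. assert (0 <= 2 * C' * Rpower c (- theta) * (2 * V c + G) - 2 * D c) by lra.
        nra. }
      assert (0 <= - g' c * (s - T)) by (apply Rmult_le_pos; lra).
      lra. }
  exists (g T + 1). split.
  - assert (0 <= g T) by (unfold g; apply Rmult_le_pos; [specialize (Vpos T); lra | left; apply exp_pos]). lra.
  - intros k t Hk Ht.
    assert (Hk' : (1 <= k <= n)%nat) by (unfold n; lia).
    pose proof (abs_le_ff (z k t)).
    assert (gam K k * ff (z k t) <= V t).
    { unfold V. apply (sumR_ge_term (fun k => gam K k * ff (z k t))); auto.
      intros j Hj. specialize (gpos j Hj); specialize (ff_ge0 (z j t)); intros; nra. }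
    assert (ff (z k t) <= 2 * (gam K k * ff (z k t))).
    { specialize (gpos k Hk'); specialize (ff_ge0 (z k t)); intros; nra. }
    assert (2 * V t + G <= g t).
    { unfold g. assert (1 <= exp (Phi t)).
      { assert (1 + Phi t <= exp (Phi t)) by apply exp_ineq1_le. specialize (Phipos t); lra. }
      specialize (Vpos t). nra. }
    specialize (Hg t Ht). lra.
Qed.
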